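(* Consider the faulty-starter delivery problem described in the context, with finisher starting position $(x,y)$, $y\ge0$, and assume $(x,y)\notin D(1,1)$, i.e. $\sqrt{(x-1)^2+y^2}\ge 1$. Let $z_1=\sqrt{(x-1)^2+y^2}$ and $$t_1=\begin{cases}1-\dfrac{3y}{4} & \text{if } x=1,\\[2mm] \dfrac{x^2+y^2+z_1(1-x)-1-z_1\sqrt{x(x+z_1-2)+y^2-z_1+1}}{2(x-1)} & \text{otherwise.}\end{cases}$$ Then the competitive ratio of $\mathcal{A}_1$ equals $\mathrm{CR}_{\mathcal{A}_1}(\max\{t_1,0\})$, where $\mathrm{CR}_{\mathcal{A}_1}(t)=\dfrac{\sqrt{(x-1)^2+y^2}+2(1-t)}{\max\{1,\sqrt{(x-t)^2+y^2}+1-t\}}$.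
   Context: Setting. In the plane let $S=(0,0)$ and $T=(1,0)$. A ''starter'' drone carrying a package starts at $S$ at time $0$ and moves at unit speed along $\overline{ST}$ towards $T$. At an unknown time $t\in[0,1]$ it fails and stays forever at $(t,0)$ with the package. A ''finisher'' drone starts at time $0$ at $P=(x,y)$ with $y\ge0$, moves at unit speed and can stop and turn instantaneously. The package can be handed over only when the drones are co-located; it is delivered at the first time the finisher, carrying the package, is at $T$. An online algorithm $\mathcal{A}$ specifies the finisher's trajectory using only $(x,y)$; $A(t)$ is its delivery time for fail time $t$. $\mathrm{Opt}(t)=\max\{1,\sqrt{(x-t)^2+y^2}+1-t\}$ is the optimal offline delivery time. $\mathrm{CR}_{\mathcal{A}}(t)=A(t)/\mathrm{Opt}(t)$ and $\mathrm{CR}_{\mathcal{A}}=\sup_{0\le t\le1}\mathrm{CR}_{\mathcal{A}}(t)$. $D(c,r)$ denotes the open disk of radius $r$ centered at $(c,0)$. Algorithm $\mathcal{A}_1$: the finisher goes straight to $T$, then moves along the segment towards $S$ until it finds the package, then returns to $T$; its delivery time is $A_1(t)=\sqrt{(x-1)^2+y^2}+2(1-t)$. *)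

(* Defs.v *)
From Stdlib Require Import Reals.
Open Scope R_scope.

(* Delivery time of algorithm A_1 for fail time t, finisher starting at (x,y). *)
Definition A1 (x y t : R) : R := sqrt ((x - 1)^2 + y^2) + 2 * (1 - t).

Definition Opt (x y t : R) : R := Rmax 1 (sqrt ((x - t)^2 + y^2) + 1 - t).

Definition CR_A1_at (x y t : R) : R := A1 x y t / Opt x y t.

(* The competitive ratio of A_1 is the supremum of CR_A1_at over t in [0,1];
   "CR_{A_1} = c" is expressed as: c is the least upper bound of this set. *)
Definition CR_A1_set (x y : R) : R -> Prop :=
  fun r => exists t, 0 <= t <= 1 /\ r = CR_A1_at x y t.

Definition z1 (x y : R) : R := sqrt ((x - 1)^2 + y^2).

Definition t1 (x y : R) : R :=
  if Req_EM_T x 1 then 1 - 3 * y / 4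
  else (x^2 + y^2 + z1 x y * (1 - x) - 1
        - z1 x y * sqrt (x * (x + z1 x y - 2) + y^2 - z1 x y + 1))
       / (2 * (x - 1)).

(* Main.v *)
Require Import Defs.
From Stdlib Require Import Reals Lra Psatz.
Open Scope R_scope.

Lemma div_le a b c : 0 < b -> a <= c * b -> a / b <= c.
Proof.
  intros Hb H. apply Rmult_le_reg_r with b; auto.
  unfold Rdiv. rewrite Rmult_assoc, Rinv_l by lra. lra.
Qed.

Lemma sqrt_le_of X Rr : 0 <= Rr -> X <= Rr^2 -> sqrt X <= Rr.
Proof. intros H1 H2. rewrite <- (sqrt_pow2 Rr H1). now apply sqrt_le_1_alt. Time Qed.

Lemma le_of_sq L c s : 0 <= c -> 0 <= s -> L^2 <= c^2 * s^2 -> L <= c * s.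
Proof.
  intros Hc Hs H. destruct (Rle_dec L (c*s)) as [|Hn]; auto. exfalso.
  assert (0 <= c*s) by nra. assert (L*L > (c*s)*(c*s)) by nra. nra.
Qed.

Lemma minkowski al be A B y : 0 <= al -> 0 <= be ->
  sqrt ((al*A + be*B)^2 + ((al+be)*y)^2) <= al * sqrt (A^2+y^2) + be * sqrt (B^2+y^2).
Proof.
  intros Hal Hbe.
  assert (HA := sqrt_pos (A^2+y^2)). assert (HB := sqrt_pos (B^2+y^2)).
  assert (HA2 := pow2_sqrt (A^2+y^2) ltac:(apply Rplus_le_le_0_compat; apply pow2_ge_0)).
  assert (HB2 := pow2_sqrt (B^2+y^2) ltac:(apply Rplus_le_le_0_compat; apply pow2_ge_0)).
  set (SA := sqrt (A^2+y^2)) in *. set (SB := sqrt (B^2+y^2)) in *.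
  apply sqrt_le_of. nra.
  assert (Hcs : A*B + y^2 <= SA*SB).
  { replace (SA*SB) with (1*(SA*SB)) by ring.
    assert ((SA*SB)^2 = (A^2+y^2)*(B^2+y^2)) by (rewrite <- HA2, <- HB2; ring).
    apply le_of_sq; try nra. rewrite H.
    assert (0 <= y^2*(A-B)^2) by (apply Rmult_le_pos; apply pow2_ge_0).
    replace ((A*B+y^2)^2) with ((A^2+y^2)*(B^2+y^2) - y^2*(A-B)^2) by ring. lra. }
  assert (0 <= al*be) by nra.
  nra.
Qed.

Lemma abs_le z a y : 0 <= z -> z^2 = a^2+y^2 -> -z <= a <= z.
Proof.
  intros Hz H. assert (0 <= y^2) by apply pow2_ge_0.
  assert (E : z^2 - a^2 = (z-a)*(z+a)) by ring.
  split.
  - destruct (Rle_dec (-z) a) as [|n]; auto.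
    assert (0 < (z-a)*(-(z+a))) by (apply Rmult_lt_0_compat; lra). lra.
  - destruct (Rle_dec a z) as [|n]; auto.
    assert (0 < (a-z)*(z+a)) by (apply Rmult_lt_0_compat; lra). lra.
Qed.

Lemma d_ge a y z u : 0 <= z -> z^2 = a^2 + y^2 -> 0 <= u ->
  z <= sqrt ((a+u)^2+y^2) + u.
Proof.
  intros Hz Hzz Hu.
  destruct (Rle_dec (z - u) 0). { assert (H := sqrt_pos ((a+u)^2+y^2)); lra. }
  assert (z - u <= sqrt ((a+u)^2+y^2)); [|lra].
  rewrite <- (sqrt_pow2 (z-u)) by lra. apply sqrt_le_1_alt.
  assert (z >= - a) by nra. nra.
Qed.

Definition fu a y z u := (z + 2*u) / (sqrt ((a+u)^2+y^2) + u).

Lemma core a y z p u :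
  1 <= z -> 0 <= p -> a = z*(p^2-1) -> y^2 = z^2*p^2*(2-p^2) ->
  0 <= u <= 1 ->
  fu a y z u <= fu a y z (Rmin (z*(p+2)/(2*(p+1))) 1).
Proof.
  intros Hz Hp Ha Hy Hu.
  assert (Hzz : z^2 = a^2+y^2) by (rewrite Hy, Ha; ring).
  assert (Hp2 : p^2 <= 2).
  { destruct (Rle_dec (p^2) 2); auto. assert (0 <= y^2) by apply pow2_ge_0.
    assert (0 < z^2*p^2) by (apply Rmult_lt_0_compat; nra).
    assert (0 < z^2*p^2*(p^2-2)) by (apply Rmult_lt_0_compat; lra).
    assert (y^2 = - (z^2*p^2*(p^2-2))) by (rewrite Hy; ring). lra. }
  set (us := z*(p+2)/(2*(p+1))).
  assert (Hd := d_ge a y z u ltac:(lra) Hzz ltac:(lra)).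
  assert (Hs2 := pow2_sqrt ((a+u)^2+y^2) ltac:(apply Rplus_le_le_0_compat; apply pow2_ge_0)).
  assert (Hs0 := sqrt_pos ((a+u)^2+y^2)).
  set (d := sqrt ((a+u)^2+y^2)) in *.
  unfold fu. fold d.
  destruct (Rle_dec us 1) as [Hus|Hus].
  - rewrite Rmin_left by lra.
    set (ds := z*p*(2*p+3)/(2*(p+1))).
    assert (Hds0 : 0 <= ds).
    { unfold ds. apply Rmult_le_pos; [|apply Rlt_le, Rinv_0_lt_compat; lra].
      apply Rmult_le_pos; nra. }
    assert (Hds : sqrt ((a+us)^2+y^2) = ds).
    { rewrite <- (sqrt_pow2 ds Hds0). f_equal. rewrite Hy, Ha. unfold us, ds.
      field. lra. }
    rewrite Hds.
    set (c := (2*p+3)/(p+1)^2).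
    assert (Hc : (z + 2*us)/(ds+us) = c).
    { assert (E : ds + us = z*(2*p^2+4*p+2)/(2*(p+1))) by (unfold ds, us; field; lra).
      rewrite E. unfold c, us. field. repeat split; nra. }
    rewrite Hc.
    assert (Hc1 : 1 <= c).
    { unfold c. apply Rmult_le_reg_r with ((p+1)^2). nra.
      unfold Rdiv. rewrite Rmult_assoc, Rinv_l by nra. nra. }
    apply div_le. lra.
    assert (Hid : c^2 * ((a+u)^2+y^2) - (z + (2-c)*u)^2 = 4*(c-1)*(u-us)^2).
    { unfold c, us. rewrite Hy, Ha. field. lra. }
    assert (z + (2-c)*u <= c * d); [|lra].
    apply le_of_sq; try lra. rewrite Hs2.
    assert (0 <= 4*(c-1)*(u-us)^2) by (apply Rmult_le_pos; [lra|apply pow2_ge_0]). lra.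
  - rewrite Rmin_right by lra.
    assert (Hd1s2 := pow2_sqrt ((a+1)^2+y^2) ltac:(apply Rplus_le_le_0_compat; apply pow2_ge_0)).
    assert (Hd10 := sqrt_pos ((a+1)^2+y^2)).
    set (d1 := sqrt ((a+1)^2+y^2)) in *.
    assert (Hd1z : d1 <= z + 1).
    { unfold d1. apply sqrt_le_of. lra. assert (a <= z) by nra. nra. }
    replace (z+2*1) with (z+2) by ring.
    set (c := (z+2)/(d1+1)).
    assert (Hcd : c*(d1+1) = z+2) by (unfold c; field; lra).
    assert (Hc1 : 1 <= c).
    { unfold c. apply Rmult_le_reg_r with (d1+1). lra.
      unfold Rdiv. rewrite Rmult_assoc, Rinv_l by lra. lra. }
    set (ds := z*p*(2*p+3)/(2*(p+1))).
    assert (Hds0 : 0 <= ds).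
    { unfold ds. apply Rmult_le_pos; [|apply Rlt_le, Rinv_0_lt_compat; lra].
      apply Rmult_le_pos; nra. }
    assert (Hds : sqrt ((a+us)^2+y^2) = ds).
    { rewrite <- (sqrt_pow2 ds Hds0). f_equal. rewrite Hy, Ha. unfold us, ds.
      field. lra. }
    assert (Hphi : (a+us)*(2*a-z) + 2*y^2 = z*ds).
    { unfold us, ds. rewrite Hy, Ha. field. lra. }
    assert (Hmk := minkowski (us-1) 1 a (a+us) y ltac:(lra) ltac:(lra)).
    rewrite Hds in Hmk.
    assert (Hsa : sqrt (a^2+y^2) = z) by (rewrite <- Hzz; apply sqrt_pow2; lra).
    rewrite Hsa in Hmk.
    assert (Hrw : sqrt (((us-1)*a + 1*(a+us))^2 + ((us-1+1)*y)^2) = us * d1).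
    { unfold d1. replace (((us-1)*a + 1*(a+us))^2 + ((us-1+1)*y)^2)
        with (us^2 * ((a+1)^2+y^2)) by ring.
      rewrite sqrt_mult by (try apply pow2_ge_0; apply Rplus_le_le_0_compat; apply pow2_ge_0).
      rewrite sqrt_pow2 by lra. reflexivity. }
    rewrite Hrw in Hmk.
    assert (Hh : 0 <= (a+1)*(2*a-z) + 2*y^2 - z*d1).
    { assert (us * ((a+1)*(2*a-z) + 2*y^2 - z*d1) >= (us-1)*(z*(z-a))).
      { assert (z*(us*d1) <= z*((us-1)*z + 1*ds)) by (apply Rmult_le_compat_l; lra).
        nra. }
      assert (z - a >= 0) by (assert (a <= z) by nra; lra).
      assert (0 <= (us-1)*(z*(z-a))) by (apply Rmult_le_pos; [lra|apply Rmult_le_pos; lra]).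
      destruct (Rle_dec 0 ((a+1)*(2*a-z) + 2*y^2 - z*d1)) as [|Hn]; auto.
      assert (us * ((a+1)*(2*a-z) + 2*y^2 - z*d1) < 0)
        by (apply Rmult_pos_neg; lra). lra. }
    assert (HG1 : 2*c^2*(a+1) - 2*(2-c)*(z+2-c) <= 0).
    { assert (Hx : 2*c^2*(a+1) - 2*(2-c)*(z+2-c) =
         - 2*c*(2*d1^2 - z*d1 - (z+2)*(a+1)) / (d1+1)).
      { unfold c. field. lra. }
      rewrite Hx. rewrite Hd1s2.
      assert (0 <= 2*c*(2*((a+1)^2+y^2) - z*d1 - (z+2)*(a+1))) by nra.
      unfold Rdiv. assert (0 < / (d1+1)) by (apply Rinv_0_lt_compat; lra). nra. }
    apply div_le. lra.
    assert (HG : c^2*((a+u)^2+y^2) - (z+(2-c)*u)^2 =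
       (2*c^2*(a+1) - 2*(2-c)*(z+2-c))*(u-1) + 4*(c-1)*(u-1)^2
       + (c^2*((a+1)^2+y^2) - (z+2-c)^2)) by ring.
    assert (HG0 : c^2*((a+1)^2+y^2) - (z+2-c)^2 = 0).
    { rewrite <- Hd1s2. assert (c*d1 = z+2-c) by lra.
      replace (c^2*d1^2) with ((c*d1)^2) by ring. rewrite H. ring. }
    assert (z + (2-c)*u <= c * d); [|lra].
    apply le_of_sq; try lra. rewrite Hs2.
    assert (0 <= (2*c^2*(a+1) - 2*(2-c)*(z+2-c))*(u-1))
      by (replace ((2*c^2*(a+1) - 2*(2-c)*(z+2-c))*(u-1)) with
            ((-(2*c^2*(a+1) - 2*(2-c)*(z+2-c)))*(1-u)) by ring; apply Rmult_le_pos; lra).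
    assert (0 <= 4*(c-1)*(u-1)^2) by (apply Rmult_le_pos; [lra|apply pow2_ge_0]).
    lra.
Qed.

Lemma CR_eq x y t : t <= 1 -> 1 <= sqrt ((x - 1)^2 + y^2) ->
  CR_A1_at x y t = fu (x-1) y (sqrt ((x - 1)^2 + y^2)) (1-t).
Proof.
  intros Ht Hz. unfold CR_A1_at, A1, Opt, fu.
  replace (x - t) with (x - 1 + (1 - t)) by ring.
  rewrite Rmax_right. f_equal; ring.
  assert (Hzz := pow2_sqrt ((x-1)^2+y^2) ltac:(apply Rplus_le_le_0_compat; apply pow2_ge_0)).
  assert (H := d_ge (x-1) y (sqrt ((x - 1)^2 + y^2)) (1-t) ltac:(lra) ltac:(rewrite Hzz; ring) ltac:(lra)).
  lra.
Qed.

Theorem theorem2 (x y : R) :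
  0 <= y ->
  1 <= sqrt ((x - 1)^2 + y^2) ->
  is_lub (CR_A1_set x y) (CR_A1_at x y (Rmax (t1 x y) 0)).
Proof.
  intros Hy Hz.
  assert (Hzz := pow2_sqrt ((x-1)^2+y^2) ltac:(apply Rplus_le_le_0_compat; apply pow2_ge_0)).
  set (z := sqrt ((x-1)^2+y^2)) in *.
  set (a := x - 1).
  assert (Hza : 0 <= z*(z+a)) by (assert (Hb := abs_le z a y ltac:(lra) Hzz); apply Rmult_le_pos; lra).
  set (S := sqrt (z*(z+a))).
  assert (HS0 : 0 <= S) by apply sqrt_pos.
  assert (HS2 : S^2 = z*(z+a)) by (apply pow2_sqrt; auto).
  set (p := S / z).
  assert (Hp : 0 <= p) by (unfold p; apply Rmult_le_pos; [lra| apply Rlt_le, Rinv_0_lt_compat; lra]).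
  assert (HSp : S = z * p) by (unfold p; field; lra).
  assert (Ha : a = z*(p^2-1)).
  { assert (z*(z*p^2) = z*(z+a)) by (rewrite <- HS2, HSp; ring).
    apply Rmult_eq_reg_l in H; lra. }
  assert (Hy2 : y^2 = z^2*p^2*(2-p^2)).
  { assert (y^2 = z^2 - a^2) by (rewrite Hzz; unfold a; ring). rewrite H, Ha. ring. }
  set (us := z*(p+2)/(2*(p+1))).
  assert (Ht1 : t1 x y = 1 - us).
  { unfold t1, z1. fold z. destruct (Req_EM_T x 1) as [Hx|Hx].
    - assert (a = 0) by (unfold a; lra).
      assert (p = 1).
      { assert (p^2 = 1). { assert (z*(p^2-1) = 0) by lra.
          apply Rmult_integral in H0; destruct H0; lra. }
        assert ((p-1)*(p+1) = 0) by (rewrite <- (Rminus_diag_eq (p^2) 1 H0); ring).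
        apply Rmult_integral in H1; destruct H1; lra. }
      assert (z = y) by (unfold z; rewrite Hx; replace ((1-1)^2+y^2) with (y^2) by ring;
         apply sqrt_pow2; auto).
      unfold us. rewrite H0, <- H1. field.
    - replace (sqrt (x * (x + z - 2) + y ^ 2 - z + 1)) with S.
      2:{ unfold S. f_equal. transitivity (z^2 + z*a); [ring| rewrite Hzz; unfold a; ring]. }
      assert (Hane : z*(p^2-1) <> 0) by (rewrite <- Ha; unfold a; lra).
      assert (Hy2' : y^2 = z^2 - a^2) by (rewrite Hzz; unfold a; ring).
      rewrite HSp. replace x with (1 + a) by (unfold a; ring).
      rewrite Hy2'. rewrite Ha. unfold us. field.
      split; [lra|]. replace (1 + z * (p ^ 2 - 1) - 1) with (z*(p^2-1)) by ring. exact Hane. }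
  assert (Hus0 : 0 <= us).
  { unfold us. apply Rmult_le_pos; [nra| apply Rlt_le, Rinv_0_lt_compat; lra]. }
  assert (Ht0 : Rmax (t1 x y) 0 = 1 - Rmin us 1).
  { rewrite Ht1. unfold Rmax, Rmin. destruct (Rle_dec (1-us) 0), (Rle_dec us 1); lra. }
  assert (Hm : 0 <= Rmin us 1 <= 1) by (unfold Rmin; destruct (Rle_dec us 1); lra).
  rewrite Ht0. split.
  - intros r [t [Ht ->]].
    rewrite !CR_eq by (auto; lra). fold z. fold a.
    replace (1 - (1 - Rmin us 1)) with (Rmin us 1) by ring.
    apply core with (p := p); auto. lra.
  - intros b Hb. apply Hb. exists (1 - Rmin us 1). split; [lra|auto].
Qed.
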